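(* If $\Gamma\vdash t:A$ is derivable in the simply typed distributive $\lambda$-calculus and $\theta$ is a substitution valid with respect to $\Gamma$, then $\theta t\in[\![A]\!]$.
   Context: Terms: $t,s,u ::= x \mid \lambda x.t \mid ts \mid \langle t,s\rangle \mid \pi_1 t \mid \pi_2 t$ (up to $\alpha$-renaming); $t\{x:=s\}$ is capture-avoiding substitution, and for a substitution $\theta$ (a map from variables to terms), $\theta t$ is the simultaneous capture-avoiding substitution. Top-level rules: $(\lambda x.t)s \mapsto t\{x:=s\}$; $\pi_i\langle t_1,t_2\rangle \mapsto t_i$ ($i=1,2$); $\langle t,s\rangle u \mapsto \langle tu, su\rangle$; $\pi_i(\lambda x.t)\mapsto \lambda x.\pi_i t$ ($i=1,2$); $\to_{\mathsf{dist}}$ is the closure of these rules under all term constructors; $\mathrm{SN}$ is the set of strongly normalizing terms. Types: $A ::= \tau \mid A\Rightarrow A \mid A\wedge A$ with $\tau$ a single atomic type. The relation $\equiv$ on types is the smallest equivalence relation containing $A\Rightarrow (B\wedge C)\equiv (A\Rightarrow B)\wedge(A\Rightarrow C)$ and closed under congruence for $\Rightarrow$ and $\wedge$. Typing rules: $\Gamma,x:A\vdash x:A$; if $\Gamma\vdash t:A$ and $A\equiv B$ then $\Gamma\vdash t:B$; if $\Gamma,x:A\vdash t:B$ then $\Gamma\vdash \lambda x.t:A\Rightarrow B$; if $\Gamma\vdash t:A\Rightarrow B$ and $\Gamma\vdash s:A$ then $\Gamma\vdash ts:B$; if $\Gamma\vdash t:A$ and $\Gamma\vdash s:B$ then $\Gamma\vdash\langle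 t,s\rangle:A\wedge B$; if $\Gamma\vdash t:A\wedge B$ then $\Gamma\vdash\pi_1 t:A$ and $\Gamma\vdash \pi_2 t:B$. Interpretation: $[\![\tau]\!]=\mathrm{SN}$; $[\![A\Rightarrow B]\!]=\{t\mid \forall s\in[\![A]\!],\ ts\in[\![B]\!]\}$; $[\![A\wedge B]\!]=\{t\mid \pi_1t\in[\![A]\!]\text{ and }\pi_2 t\in[\![B]\!]\}$. A substitution $\theta$ is valid with respect to $\Gamma$ if $\theta x\in[\![A]\!]$ for every $x:A\in\Gamma$. *)

(* Defs.v *)
From Stdlib Require Import List.
Import ListNotations.

Inductive term : Type :=
| Var (n : nat)
| Lam (t : term)
| App (t s : term)
| Pair (t s : term)
| Pi1 (t : term)
| Pi2 (t : term).

Definition up_ren (xi : nat -> nat) (n : nat) : nat :=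
  match n with 0 => 0 | S m => S (xi m) end.

Fixpoint ren (xi : nat -> nat) (t : term) : term :=
  match t with
  | Var n => Var (xi n)
  | Lam t => Lam (ren (up_ren xi) t)
  | App t s => App (ren xi t) (ren xi s)
  | Pair t s => Pair (ren xi t) (ren xi s)
  | Pi1 t => Pi1 (ren xi t)
  | Pi2 t => Pi2 (ren xi t)
  end.

Definition up (sigma : nat -> term) (n : nat) : term :=
  match n with 0 => Var 0 | S m => ren S (sigma m) end.

Fixpoint subst (sigma : nat -> term) (t : term) : term :=
  match t with
  | Var n => sigma n
  | Lam t => Lam (subst (up sigma) t)
  | App t s => App (subst sigma t) (subst sigma s)
  | Pair t s => Pair (subst sigma t) (subst sigma s)
  | Pi1 t => Pi1 (subst sigma t)
  | Pi2 t => Pi2 (subst sigma t)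
  end.

Definition scons (s : term) (sigma : nat -> term) (n : nat) : term :=
  match n with 0 => s | S m => sigma m end.

(* t{x:=s} where x is the bound variable 0 *)
Definition subst1 (t s : term) : term := subst (scons s Var) t.

Inductive step : term -> term -> Prop :=
| st_beta t s : step (App (Lam t) s) (subst1 t s)
| st_proj1 t s : step (Pi1 (Pair t s)) t
| st_proj2 t s : step (Pi2 (Pair t s)) s
| st_app_pair t s u : step (App (Pair t s) u) (Pair (App t u) (App s u))
| st_pi1_lam t : step (Pi1 (Lam t)) (Lam (Pi1 t))
| st_pi2_lam t : step (Pi2 (Lam t)) (Lam (Pi2 t))
| st_lam t t' : step t t' -> step (Lam t) (Lam t')
| st_appl t t' s : step t t' -> step (App t s) (App t' s)
| st_appr t s s' : step s s' -> step (App t s) (App t s')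
| st_pairl t t' s : step t t' -> step (Pair t s) (Pair t' s)
| st_pairr t s s' : step s s' -> step (Pair t s) (Pair t s')
| st_pi1 t t' : step t t' -> step (Pi1 t) (Pi1 t')
| st_pi2 t t' : step t t' -> step (Pi2 t) (Pi2 t').

Inductive SN : term -> Prop :=
| SN_intro t : (forall t', step t t' -> SN t') -> SN t.

Inductive ty : Type :=
| Atom
| Arr (A B : ty)
| And (A B : ty).

Inductive ty_equiv : ty -> ty -> Prop :=
| eq_dist A B C : ty_equiv (Arr A (And B C)) (And (Arr A B) (Arr A C))
| eq_refl A : ty_equiv A A
| eq_sym A B : ty_equiv A B -> ty_equiv B A
| eq_trans A B C : ty_equiv A B -> ty_equiv B C -> ty_equiv A C
| eq_arr A A' B B' : ty_equiv A A' -> ty_equiv B B' -> ty_equiv (Arr A B) (Arr A' B')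
| eq_and A A' B B' : ty_equiv A A' -> ty_equiv B B' -> ty_equiv (And A B) (And A' B').

(* contexts: the type of de Bruijn variable n is the n-th entry *)
Definition ctx := list ty.

Inductive typed : ctx -> term -> ty -> Prop :=
| ty_var G n A : nth_error G n = Some A -> typed G (Var n) A
| ty_equiv_rule G t A B : typed G t A -> ty_equiv A B -> typed G t B
| ty_lam G t A B : typed (A :: G) t B -> typed G (Lam t) (Arr A B)
| ty_app G t s A B : typed G t (Arr A B) -> typed G s A -> typed G (App t s) B
| ty_pair G t s A B : typed G t A -> typed G s B -> typed G (Pair t s) (And A B)
| ty_pi1 G t A B : typed G t (And A B) -> typed G (Pi1 t) A
| ty_pi2 G t A B : typed G t (And A B) -> typed G (Pi2 t) B.

Fixpoint interp (A : ty) : term -> Prop :=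
  match A with
  | Atom => SN
  | Arr A B => fun t => forall s, interp A s -> interp B (App t s)
  | And A B => fun t => interp A (Pi1 t) /\ interp B (Pi2 t)
  end.

Definition valid (theta : nat -> term) (G : ctx) : Prop :=
  forall n A, nth_error G n = Some A -> interp A (theta n).

(* Main.v *)
Require Import Defs.
From Stdlib Require Import List.

Lemma ren_ext xi zeta t : (forall n, xi n = zeta n) -> ren xi t = ren zeta t.
Proof.
  revert xi zeta; induction t; intros xi zeta H; simpl; f_equal; auto.
  apply IHt; intros [|n]; simpl; f_equal; auto.
Qed.

Lemma subst_ext s1 s2 t : (forall n, s1 n = s2 n) -> subst s1 t = subst s2 t.
Proof.
  revert s1 s2; induction t; intros s1 s2 H; simpl; f_equal; auto.
  apply IHt; intros [|n]; simpl; f_equal; auto.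
Qed.

Lemma ren_ren xi zeta t : ren xi (ren zeta t) = ren (fun n => xi (zeta n)) t.
Proof.
  revert xi zeta; induction t; intros xi zeta; simpl; f_equal; auto.
  rewrite IHt. apply ren_ext. intros [|n]; reflexivity.
Qed.

Lemma ren_subst xi s t : ren xi (subst s t) = subst (fun n => ren xi (s n)) t.
Proof.
  revert xi s; induction t; intros xi s; simpl; f_equal; auto.
  rewrite IHt. apply subst_ext. intros [|n]; simpl; auto.
  rewrite !ren_ren. apply ren_ext. intros; reflexivity.
Qed.

Lemma subst_ren s xi t : subst s (ren xi t) = subst (fun n => s (xi n)) t.
Proof.
  revert xi s; induction t; intros xi s; simpl; f_equal; auto.
  rewrite IHt. apply subst_ext. intros [|n]; simpl; auto.
Qed.

Lemma subst_subst s tau t : subst tau (subst s t) = subst (fun n => subst tau (s n)) t.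
Proof.
  revert s tau; induction t; intros s tau; simpl; f_equal; auto.
  rewrite IHt. apply subst_ext. intros [|n]; simpl; auto.
  rewrite subst_ren, ren_subst. apply subst_ext. intros; reflexivity.
Qed.

Lemma subst_var t : subst Var t = t.
Proof.
  induction t; simpl; f_equal; auto.
  rewrite <- IHt at 2. apply subst_ext. intros [|n]; reflexivity.
Qed.

Lemma subst1_up sigma t s :
  subst1 (subst (up sigma) t) s = subst (scons s sigma) t.
Proof.
  unfold subst1. rewrite subst_subst. apply subst_ext. intros [|n]; simpl; auto.
  rewrite subst_ren. apply subst_var.
Qed.

Lemma subst_subst1 sigma t s :
  subst sigma (subst1 t s) = subst1 (subst (up sigma) t) (subst sigma s).
Proof.
  rewrite subst1_up. unfold subst1. rewrite subst_subst.
  apply subst_ext. intros [|n]; reflexivity.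
Qed.

Lemma step_subst t t' : step t t' -> forall sigma, step (subst sigma t) (subst sigma t').
Proof.
  induction 1; intros sigma; simpl; try (constructor; auto).
  rewrite subst_subst1. constructor.
Qed.

Lemma SN_step t t' : SN t -> step t t' -> SN t'.
Proof. intros [? H] Hs. auto. Qed.

Lemma SN_subst_inv sigma : forall u, SN u -> forall t, u = subst sigma t -> SN t.
Proof.
  induction 1 as [u _ IH]; intros t ->. constructor; intros t' Hs.
  eapply IH; [apply step_subst; exact Hs | reflexivity].
Qed.

Lemma SN_app_l : forall u, SN u -> forall t s, u = App t s -> SN t.
Proof.
  induction 1 as [u _ IH]; intros t s ->. constructor; intros t' Hs.
  eapply IH; [apply st_appl; exact Hs | reflexivity].
Qed.

Lemma SN_pi1 : forall u, SN u -> forall t, u = Pi1 t -> SN t.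
Proof.
  induction 1 as [u _ IH]; intros t ->. constructor; intros t' Hs.
  eapply IH; [apply st_pi1; exact Hs | reflexivity].
Qed.

Lemma SN_pi2 : forall u, SN u -> forall t, u = Pi2 t -> SN t.
Proof.
  induction 1 as [u _ IH]; intros t ->. constructor; intros t' Hs.
  eapply IH; [apply st_pi2; exact Hs | reflexivity].
Qed.

Definition neutral t := match t with Lam _ | Pair _ _ => False | _ => True end.

Definition CR (P : term -> Prop) :=
  (forall t, P t -> SN t) /\ (forall t t', P t -> step t t' -> P t') /\
  (forall t, neutral t -> (forall t', step t t' -> P t') -> P t).

Lemma CR_var P : CR P -> P (Var 0).
Proof. intros (_ & _ & H3). apply H3. exact I. intros t' Hs; inversion Hs. Qed.

Lemma cr_interp A : CR (interp A).
Proof.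
  induction A as [|A IHA B IHB|A IHA B IHB]; simpl.
  - split; [auto|split]. intros; eapply SN_step; eauto.
    intros; constructor; auto.
  - destruct IHA as (A1 & A2 & A3). destruct IHB as (B1 & B2 & B3).
    split; [|split].
    + intros t H. assert (HV : interp A (Var 0)) by (apply CR_var; split; auto).
      eapply SN_app_l; [apply B1, H, HV | reflexivity].
    + intros t t' H Hs s Hs0. eapply B2. apply H, Hs0. constructor; auto.
    + intros t Hn H s Hs. assert (Hsn : SN s) by auto.
      revert Hs. induction Hsn as [s _ IHs]; intros Hs.
      apply B3. exact I. intros u Hst. inversion Hst; subst.
      * destruct Hn.
      * destruct Hn.
      * apply H; auto.
      * apply IHs; eauto.
  - destruct IHA as (A1 & A2 & A3). destruct IHB as (B1 & B2 & B3).
    split; [|split].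
    + intros t [H _]. eapply SN_pi1; [apply A1, H | reflexivity].
    + intros t t' [H1 H2] Hs. split; [eapply A2|eapply B2]; eauto; constructor; auto.
    + intros t Hn H. split.
      * apply A3. exact I. intros u Hst. inversion Hst; subst; try destruct Hn.
        apply H; auto.
      * apply B3. exact I. intros u Hst. inversion Hst; subst; try destruct Hn.
        apply H; auto.
Qed.

Lemma lam_lemma P Q : CR P -> CR Q -> forall w,
  (forall s0, P s0 -> Q (subst1 w s0)) -> forall s, P s -> Q (App (Lam w) s).
Proof.
  intros HP HQ w Hw s Hs.
  pose proof HP as (P1 & P2 & P3). pose proof HQ as (Q1 & Q2 & Q3).
  assert (Hsnw : SN w).
  { pose proof (Q1 _ (Hw (Var 0) (CR_var P HP))) as H0.
    unfold subst1 in H0. eapply SN_subst_inv; [exact H0 | reflexivity]. }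
  revert s Hs Hw. induction Hsnw as [w _ IHw]; intros s Hs Hw.
  assert (Hsn : SN s) by auto.
  revert Hs. induction Hsn as [s _ IHs]; intros Hs.
  apply Q3. exact I. intros u Hst. inversion Hst; subst.
  - auto.
  - inversion H2; subst. apply IHw; auto.
    intros s0 Hs0. eapply Q2. apply Hw, Hs0. apply step_subst; auto.
  - apply IHs; eauto.
Qed.

Lemma pi1pair P : CR P -> forall x y, P x -> SN y -> P (Pi1 (Pair x y)).
Proof.
  intros (P1 & P2 & P3) x y Hx Hy. assert (Hsx : SN x) by auto.
  revert y Hy. induction Hsx as [x _ IHx]; intros y Hy.
  induction Hy as [y Hy' IHy].
  apply P3. exact I. intros u Hst. inversion Hst; subst; auto.
  inversion H0; subst.
  - apply IHx; eauto. constructor; auto.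
  - apply IHy; auto.
Qed.

Lemma pi2pair P : CR P -> forall x y, SN x -> P y -> P (Pi2 (Pair x y)).
Proof.
  intros (P1 & P2 & P3) x y Hx Hy. assert (Hsy : SN y) by auto.
  revert x Hx. induction Hsy as [y _ IHy]; intros x Hx.
  induction Hx as [x Hx' IHx].
  apply P3. exact I. intros u Hst. inversion Hst; subst; auto.
  inversion H0; subst.
  - apply IHx; auto.
  - apply IHy; eauto. constructor; auto.
Qed.

Lemma dir1 PA PB : CR PA -> CR PB -> forall t, SN t ->
  (forall s0, PA s0 -> PB (Pi1 (App t s0))) -> forall s, PA s -> PB (App (Pi1 t) s).
Proof.
  intros HA HB t Ht. pose proof HA as (A1 & A2 & A3). pose proof HB as (B1 & B2 & B3).
  induction Ht as [t _ IHt]; intros H s Hs.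
  assert (Hsn : SN s) by auto. revert Hs. induction Hsn as [s _ IHs]; intros Hs.
  apply B3. exact I. intros u Hst. inversion Hst; subst.
  - inversion H3; subst.
    + eapply B2. eapply B2. apply (H s Hs). apply st_pi1, st_app_pair. apply st_proj1.
    + apply (lam_lemma PA PB HA HB); auto. intros s0 Hs0.
      eapply B2. apply (H s0 Hs0). apply st_pi1, st_beta.
    + apply IHt; auto. intros s0 Hs0. eapply B2. apply (H s0 Hs0).
      apply st_pi1, st_appl; auto.
  - apply IHs; eauto.
Qed.

Lemma dir1' PA PB : CR PA -> CR PB -> forall t, SN t ->
  (forall s0, PA s0 -> PB (Pi2 (App t s0))) -> forall s, PA s -> PB (App (Pi2 t) s).
Proof.
  intros HA HB t Ht. pose proof HA as (A1 & A2 & A3). pose proof HB as (B1 & B2 & B3).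
  induction Ht as [t _ IHt]; intros H s Hs.
  assert (Hsn : SN s) by auto. revert Hs. induction Hsn as [s _ IHs]; intros Hs.
  apply B3. exact I. intros u Hst. inversion Hst; subst.
  - inversion H3; subst.
    + eapply B2. eapply B2. apply (H s Hs). apply st_pi2, st_app_pair. apply st_proj2.
    + apply (lam_lemma PA PB HA HB); auto. intros s0 Hs0.
      eapply B2. apply (H s0 Hs0). apply st_pi2, st_beta.
    + apply IHt; auto. intros s0 Hs0. eapply B2. apply (H s0 Hs0).
      apply st_pi2, st_appl; auto.
  - apply IHs; eauto.
Qed.

Lemma dir2 PA PB PC : CR PA -> CR PB -> CR PC -> forall t,
  (forall s0, PA s0 -> PB (App (Pi1 t) s0)) ->
  (forall s0, PA s0 -> PC (App (Pi2 t) s0)) ->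
  forall s, PA s -> PB (Pi1 (App t s)).
Proof.
  intros HA HB HC t H1 H2.
  pose proof HA as (A1 & A2 & A3). pose proof HB as (B1 & B2 & B3).
  pose proof HC as (C1 & C2 & C3).
  assert (Ht : SN t).
  { pose proof (B1 _ (H1 _ (CR_var _ HA))) as H0.
    eapply SN_pi1; [eapply SN_app_l; [exact H0|reflexivity]|reflexivity]. }
  revert H1 H2. induction Ht as [t _ IHt]; intros H1 H2 s Hs.
  assert (Hsn : SN s) by auto. revert Hs. induction Hsn as [s _ IHs]; intros Hs.
  apply B3. exact I. intros u Hst. inversion Hst; subst.
  inversion H0; subst.
  - eapply B2. eapply B2. apply (H1 s Hs). apply st_appl, st_pi1_lam. apply st_beta.
  - apply pi1pair; auto.
    + eapply B2. apply (H1 s Hs). apply st_appl, st_proj1.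
    + apply C1. eapply C2. apply (H2 s Hs). apply st_appl, st_proj2.
  - apply IHt; auto.
    + intros s0 Hs0. eapply B2. apply (H1 s0 Hs0). apply st_appl, st_pi1; auto.
    + intros s0 Hs0. eapply C2. apply (H2 s0 Hs0). apply st_appl, st_pi2; auto.
  - apply IHs; eauto.
Qed.

Lemma dir2' PA PB PC : CR PA -> CR PB -> CR PC -> forall t,
  (forall s0, PA s0 -> PB (App (Pi1 t) s0)) ->
  (forall s0, PA s0 -> PC (App (Pi2 t) s0)) ->
  forall s, PA s -> PC (Pi2 (App t s)).
Proof.
  intros HA HB HC t H1 H2.
  pose proof HA as (A1 & A2 & A3). pose proof HB as (B1 & B2 & B3).
  pose proof HC as (C1 & C2 & C3).
  assert (Ht : SN t).
  { pose proof (B1 _ (H1 _ (CR_var _ HA))) as H0.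
    eapply SN_pi1; [eapply SN_app_l; [exact H0|reflexivity]|reflexivity]. }
  revert H1 H2. induction Ht as [t _ IHt]; intros H1 H2 s Hs.
  assert (Hsn : SN s) by auto. revert Hs. induction Hsn as [s _ IHs]; intros Hs.
  apply C3. exact I. intros u Hst. inversion Hst; subst.
  inversion H0; subst.
  - eapply C2. eapply C2. apply (H2 s Hs). apply st_appl, st_pi2_lam. apply st_beta.
  - apply pi2pair; auto.
    + apply B1. eapply B2. apply (H1 s Hs). apply st_appl, st_proj1.
    + eapply C2. apply (H2 s Hs). apply st_appl, st_proj2.
  - apply IHt; auto.
    + intros s0 Hs0. eapply B2. apply (H1 s0 Hs0). apply st_appl, st_pi1; auto.
    + intros s0 Hs0. eapply C2. apply (H2 s0 Hs0). apply st_appl, st_pi2; auto.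
  - apply IHs; eauto.
Qed.

Lemma interp_equiv A B : ty_equiv A B -> forall t, interp A t <-> interp B t.
Proof.
  induction 1; intros t; simpl in *.
  - split.
    + intros H. assert (Ht : SN t) by (apply (proj1 (cr_interp (Arr A (And B C)))); exact H).
      split.
      * apply (dir1 _ _ (cr_interp A) (cr_interp B)); auto. intros; apply H; auto.
      * apply (dir1' _ _ (cr_interp A) (cr_interp C)); auto. intros; apply H; auto.
    + intros [H1 H2] s Hs. split.
      * apply (dir2 _ _ _ (cr_interp A) (cr_interp B) (cr_interp C)); auto.
      * apply (dir2' _ _ _ (cr_interp A) (cr_interp B) (cr_interp C)); auto.
  - tauto.
  - firstorder.
  - firstorder.
  - split; intros H1 s Hs; apply IHty_equiv2, H1, IHty_equiv1, Hs.
  - firstorder.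
Qed.

Theorem lemma8 (G : ctx) (t : term) (A : ty) (theta : nat -> term) :
  typed G t A -> valid theta G -> interp A (subst theta t).
Proof.
  intros H. revert theta. induction H; intros theta Hv; simpl.
  - apply Hv; auto.
  - apply (interp_equiv A B); auto.
  - intros s Hs. apply (lam_lemma _ _ (cr_interp A) (cr_interp B)); auto.
    intros s0 Hs0. rewrite subst1_up. apply IHtyped.
    intros [|n] C HC; simpl in *.
    + injection HC as <-. exact Hs0.
    + apply Hv; auto.
  - apply (IHtyped1 theta Hv), (IHtyped2 theta Hv).
  - split.
    + apply pi1pair. apply cr_interp. auto. apply (proj1 (cr_interp B)); auto.
    + apply pi2pair. apply cr_interp. apply (proj1 (cr_interp A)); auto. auto.
  - apply (IHtyped theta Hv).
  - apply (IHtyped theta Hv).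
Qed.
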